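(* Let $b(r),h(r)$ be smooth positive functions on an interval of $r>0$ and consider the metric $ds^2=-b^2dt^2+\dfrac{h^2}{b^2}dr^2+r^2(d\theta^2+\sin^2\theta\,d\phi^2)$. Let $\kappa_1,\kappa_2,\kappa_3$ be constants and $$K_{kl}=(\kappa_2r^2-2\kappa_3b^2)u_ku_l+(\kappa_1+2\kappa_2r^2+\kappa_3b^2)g_{kl}-\kappa_2r^2\,\chi_k\chi_l,$$ and let $T_{kl}=(\mu+p_\perp)u_ku_l+p_\perp g_{kl}+(p_r-p_\perp)\chi_k\chi_l$ be an anisotropic fluid stress-energy tensor with functions $\mu(r),p_r(r),p_\perp(r)$. Suppose the conformal Killing gravity field equations $R_{kl}-\tfrac12Rg_{kl}=T_{kl}+K_{kl}$ hold. Then $p_r=-\mu$ if and only if there is a constant $\kappa_4$ such that $$\frac{1}{h^2}=\kappa_3r^2+\kappa_4 .$$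
   Context: $u_k$ is the unit timelike covector with components $u_0=-b$ and all others zero; $\chi_k$ is the unit radial covector with $\chi_r=h/b$ and all others zero. $R_{kl}$ is the Ricci tensor and $R$ the scalar curvature of the metric. *)

(* Defs.v *)
From Stdlib Require Import Reals.
From Coquelicot Require Import Coquelicot.
Open Scope R_scope.

(* Coordinates x : nat -> R, with x 0 = t, x 1 = r, x 2 = theta, x 3 = phi. *)
Definition upd (x : nat -> R) (i : nat) (s : R) : nat -> R :=
  fun j => if Nat.eqb j i then s else x j.

Definition pderiv (f : (nat -> R) -> R) (i : nat) (x : nat -> R) : R :=
  Derive (fun s => f (upd x i s)) (x i).

Definition sum4 (f : nat -> R) : R := sum_f_R0 f 3.

Definition metric := (nat -> R) -> nat -> nat -> R.

Definition christoffel (g ginv : metric) (a b c : nat) (x : nat -> R) : R :=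
  / 2 * sum4 (fun d => ginv x a d *
      (pderiv (fun y => g y d c) b x + pderiv (fun y => g y d b) c x
       - pderiv (fun y => g y b c) d x)).

Definition ricci (g ginv : metric) (b c : nat) (x : nat -> R) : R :=
  let G := christoffel g ginv in
  sum4 (fun a =>
    pderiv (fun y => G a b c y) a x - pderiv (fun y => G a b a y) c x
    + sum4 (fun d => G a a d x * G d b c x - G a c d x * G d b a x)).

Definition scalar_curv (g ginv : metric) (x : nat -> R) : R :=
  sum4 (fun b => sum4 (fun c => ginv x b c * ricci g ginv b c x)).

Definition sss_diag (b h : R -> R) (x : nat -> R) (i : nat) : R :=
  match i with
  | 0%nat => - (b (x 1%nat))^2
  | 1%nat => (h (x 1%nat))^2 / (b (x 1%nat))^2
  | 2%nat => (x 1%nat)^2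
  | 3%nat => (x 1%nat)^2 * (sin (x 2%nat))^2
  | _ => 0
  end.

Definition sss_metric (b h : R -> R) : metric :=
  fun x i j => if Nat.eqb i j then sss_diag b h x i else 0.

Definition sss_inv (b h : R -> R) : metric :=
  fun x i j => if Nat.eqb i j then / sss_diag b h x i else 0.

Definition u_cov (b : R -> R) (x : nat -> R) (k : nat) : R :=
  if Nat.eqb k 0 then - b (x 1%nat) else 0.
Definition chi_cov (b h : R -> R) (x : nat -> R) (k : nat) : R :=
  if Nat.eqb k 1 then h (x 1%nat) / b (x 1%nat) else 0.

Definition K_tensor (b h : R -> R) (k1 k2 k3 : R) (x : nat -> R) (k l : nat) : R :=
  let r := x 1%nat in
  (k2 * r^2 - 2 * k3 * (b r)^2) * u_cov b x k * u_cov b x l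
  + (k1 + 2 * k2 * r^2 + k3 * (b r)^2) * sss_metric b h x k l
  - k2 * r^2 * chi_cov b h x k * chi_cov b h x l.

Definition T_tensor (b h mu pr pt : R -> R) (x : nat -> R) (k l : nat) : R :=
  let r := x 1%nat in
  (mu r + pt r) * u_cov b x k * u_cov b x l + pt r * sss_metric b h x k l
  + (pr r - pt r) * chi_cov b h x k * chi_cov b h x l.

(* Main.v *)
Require Import Defs.
From Stdlib Require Import Reals Lra Lia.
From Coquelicot Require Import Coquelicot.
Open Scope R_scope.

Definition dG (b h : R->R) (d c e : nat) (r th : R) : R :=
 if Nat.eqb d c then
  match d, e with
  | 0%nat, 1%nat => - (2 * b r * Derive b r)
  | 1%nat, 1%nat => (2 * h r * Derive h r * b r^2 - h r^2 * (2 * b r * Derive b r)) / (b r^2)^2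
  | 2%nat, 1%nat => 2*r
  | 3%nat, 1%nat => 2*r*sin th^2
  | 3%nat, 2%nat => r^2 * (2 * sin th * cos th)
  | _, _ => 0 end
 else 0.

Lemma Derive_cst0 (c x : R) : Derive (fun _ => c) x = 0.
Proof. apply Derive_const. Qed.

Lemma pderiv_g (b h : R -> R) (y : nat -> R) (d c e : nat) :
  ex_derive b (y 1%nat) -> ex_derive h (y 1%nat) -> b (y 1%nat) <> 0 ->
  (e < 4)%nat ->
  pderiv (fun y => sss_metric b h y d c) e y = dG b h d c e (y 1%nat) (y 2%nat).
Proof.
  intros Eb Eh Bn He. unfold pderiv, sss_metric, dG.
  destruct (Nat.eqb d c) eqn:Edc; [|apply Derive_cst0].
  destruct e as [|[|[|[|e]]]]; try lia;
  (destruct d as [|[|[|[|d]]]]; unfold sss_diag, upd; simpl;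
   try apply Derive_cst0;
   apply is_derive_unique; auto_derive; repeat split; auto;
   try change (fun x : R => b x) with b; try change (fun x : R => h x) with h; try field; auto).
Qed.

Definition diagF (b h : R -> R) (i : nat) (r th : R) : R :=
  match i with
  | 0%nat => - (b r)^2
  | 1%nat => (h r)^2 / (b r)^2
  | 2%nat => r^2
  | 3%nat => r^2 * (sin th)^2
  | _ => 0
  end.
Definition invF (b h : R -> R) (a d : nat) (r th : R) : R :=
  if Nat.eqb a d then / diagF b h a r th else 0.
Definition GamF (b h : R -> R) (a bb c : nat) (r th : R) : R :=
  / 2 * sum4 (fun d => invF b h a d r th *
     (dG b h d c bb r th + dG b h d bb c r th - dG b h bb c d r th)).

Lemma inv_eq b h y a d : sss_inv b h y a d = invF b h a d (y 1%nat) (y 2%nat).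
Proof.
  unfold sss_inv, invF. destruct (Nat.eqb a d); [|reflexivity].
  destruct a as [|[|[|[|a]]]]; reflexivity.
Qed.

Lemma chr_eq (b h : R -> R) (y : nat -> R) (a bb c : nat) :
  ex_derive b (y 1%nat) -> ex_derive h (y 1%nat) -> b (y 1%nat) <> 0 ->
  (bb < 4)%nat -> (c < 4)%nat ->
  christoffel (sss_metric b h) (sss_inv b h) a bb c y = GamF b h a bb c (y 1%nat) (y 2%nat).
Proof.
  intros Eb Eh Bn H1 H2. unfold christoffel, GamF, sum4. cbn [sum_f_R0].
  rewrite !pderiv_g by (auto; lia). rewrite !inv_eq; reflexivity.
Qed.

Lemma loc_int (r0 r1 x : R) (P : R -> Prop) :
  r0 < x < r1 -> (forall y, r0 < y < r1 -> P y) -> locally x P.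
Proof.
  intros Hx HP.
  assert (Hm : 0 < Rmin (x - r0) (r1 - x)) by (apply Rmin_pos; lra).
  exists (mkposreal _ Hm). intros y Hy. apply HP.
  unfold ball in Hy; simpl in Hy; unfold AbsRing_ball, abs, minus, plus, opp in Hy; simpl in Hy.
  apply Rabs_lt_between' in Hy.
  pose proof (Rmin_l (x - r0) (r1 - x)). pose proof (Rmin_r (x - r0) (r1 - x)). lra.
Qed.

Lemma pd_chr (r0 r1 : R) (b h : R -> R) (x : nat -> R) (a bb c e : nat) :
  (forall r, r0 < r < r1 -> ex_derive b r /\ ex_derive h r /\ b r <> 0) ->
  r0 < x 1%nat < r1 -> (bb < 4)%nat -> (c < 4)%nat ->
  pderiv (fun y => christoffel (sss_metric b h) (sss_inv b h) a bb c y) e x =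
  match e with
  | 1%nat => Derive (fun s => GamF b h a bb c s (x 2%nat)) (x 1%nat)
  | 2%nat => Derive (fun s => GamF b h a bb c (x 1%nat) s) (x 2%nat)
  | _ => 0 end.
Proof.
  intros Hreg Hx Hb Hc. unfold pderiv.
  destruct (Hreg _ Hx) as [E1 [E2 E3]].
  destruct e as [|[|[|e]]].
  - rewrite <- (Derive_const (GamF b h a bb c (x 1%nat) (x 2%nat)) (x 0%nat)).
    apply Derive_ext. intros t. rewrite chr_eq; auto.
  - apply Derive_ext_loc. apply (loc_int r0 r1); auto.
    intros y Hy. destruct (Hreg _ Hy) as [F1 [F2 F3]]. rewrite chr_eq; auto.
  - apply Derive_ext. intros t. rewrite chr_eq; auto.
  - rewrite <- (Derive_const (GamF b h a bb c (x 1%nat) (x 2%nat)) (x (S (S (S e))))).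
    apply Derive_ext. intros t. rewrite chr_eq; auto.
Qed.

Ltac nz := repeat (apply Rmult_integral_contrapositive_currified || apply Ropp_neq_0_compat || apply Rinv_neq_0_compat || apply pow_nonzero); auto; try lra.

Lemma key (r0 r1 : R) (b h mu pr pt : R -> R) (k1 k2 k3 : R)
  (Hr0 : 0 <= r0) (Hr01 : r0 < r1)
  (Hb_smooth : forall (n : nat) (r : R), r0 < r < r1 -> ex_derive_n b n r)
  (Hh_smooth : forall (n : nat) (r : R), r0 < r < r1 -> ex_derive_n h n r)
  (Hb_pos : forall r : R, r0 < r < r1 -> 0 < b r)
  (Hh_pos : forall r : R, r0 < r < r1 -> 0 < h r)
  (Hfield : forall (x : nat -> R) (k l : nat),
      r0 < x 1%nat < r1 -> 0 < x 2%nat < PI -> (k < 4)%nat -> (l < 4)%nat ->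
      ricci (sss_metric b h) (sss_inv b h) k l x
        - / 2 * scalar_curv (sss_metric b h) (sss_inv b h) x * sss_metric b h x k l
      = T_tensor b h mu pr pt x k l + K_tensor b h k1 k2 k3 x k l)
  (r : R) (Hr : r0 < r < r1) :
  pr r + mu r = 2 * (b r)^2 * Derive h r / (r * (h r)^3) + 2 * k3 * (b r)^2.
Proof.
  assert (Hreg : forall r, r0 < r < r1 -> ex_derive b r /\ ex_derive h r /\ b r <> 0).
  { intros s Hs. split; [exact (Hb_smooth 1%nat s Hs)|].
    split; [exact (Hh_smooth 1%nat s Hs)|]. specialize (Hb_pos s Hs); lra. }
  set (x := fun i : nat => match i with 1%nat => r | 2%nat => PI/2 | _ => 0 end).
  assert (Hx1 : r0 < x 1%nat < r1) by exact Hr.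
  assert (Hx2 : 0 < x 2%nat < PI) by (simpl; pose proof PI_RGT_0; lra).
  pose proof (Hfield x 0%nat 0%nat Hx1 Hx2 ltac:(lia) ltac:(lia)) as E00.
  pose proof (Hfield x 1%nat 1%nat Hx1 Hx2 ltac:(lia) ltac:(lia)) as E11.
  clear Hfield.
  set (Sc := scalar_curv (sss_metric b h) (sss_inv b h) x) in *.
  clearbody Sc.
  unfold ricci, sum4 in E00, E11. cbn [sum_f_R0] in E00, E11.
  rewrite !(pd_chr r0 r1) in E00, E11 by (auto; lia).
  rewrite !chr_eq in E00, E11 by (auto; try apply Hreg; auto; lia).
  change (x 1%nat) with r in E11, E00; change (x 2%nat) with (PI/2) in E11, E00.
  assert (Eb2 : ex_derive (Derive b) r) by exact (Hb_smooth 2%nat r Hr).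
  assert (Eh2 : ex_derive (Derive h) r) by exact (Hh_smooth 2%nat r Hr).
  destruct (Hreg r Hr) as [Eb [Eh Bn]].
  assert (Hn : h r <> 0) by (specialize (Hh_pos r Hr); lra).
  assert (rn : r <> 0) by lra.
  assert (Hs : sin (PI/2) <> 0) by (rewrite sin_PI2; lra).
  repeat match type of E11 with context [Derive (fun s => GamF ?b ?h ?a ?bb ?c ?r s) ?th] =>
   let Hd := fresh in
   eassert (Hd : Derive (fun s => GamF b h a bb c r s) th = _);
   [ apply is_derive_unique; unfold GamF, invF, dG, diagF, sum4; simpl; auto_derive; [ repeat split; auto; try exact Eb2; try exact Eh2; nz | reflexivity ] | rewrite Hd in E11; clear Hd ] end.
  repeat match type of E11 with context [Derive (fun s => GamF ?b ?h ?a ?bb ?c s ?th) ?r] =>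
   let Hd := fresh in
   eassert (Hd : Derive (fun s => GamF b h a bb c s th) r = _);
   [ apply is_derive_unique; unfold GamF, invF, dG, diagF, sum4; simpl; auto_derive; [ repeat split; auto; try exact Eb2; try exact Eh2; nz | reflexivity ] | rewrite Hd in E11; clear Hd ] end.
  repeat match type of E00 with context [Derive (fun s => GamF ?b ?h ?a ?bb ?c ?r s) ?th] =>
   let Hd := fresh in
   eassert (Hd : Derive (fun s => GamF b h a bb c r s) th = _);
   [ apply is_derive_unique; unfold GamF, invF, dG, diagF, sum4; simpl; auto_derive; [ repeat split; auto; try exact Eb2; try exact Eh2; nz | reflexivity ] | rewrite Hd in E00; clear Hd ] end.
  repeat match type of E00 with context [Derive (fun s => GamF ?b ?h ?a ?bb ?c s ?th) ?r] =>
   let Hd := fresh in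
   eassert (Hd : Derive (fun s => GamF b h a bb c s th) r = _);
   [ apply is_derive_unique; unfold GamF, invF, dG, diagF, sum4; simpl; auto_derive; [ repeat split; auto; try exact Eb2; try exact Eh2; nz | reflexivity ] | rewrite Hd in E00; clear Hd ] end.
  unfold GamF, invF, dG, diagF, sum4 in E00, E11; simpl in E00, E11.
  change (fun x : R => b x) with b in E00, E11.
  change (fun x : R => h x) with h in E00, E11.
  unfold T_tensor, K_tensor, u_cov, chi_cov, sss_metric, sss_diag in E00, E11; simpl in E00, E11.
  rewrite sin_PI2, cos_PI2 in E00, E11.
  change RinvImpl.Rinv with Rinv in E00, E11.
  assert (forall z:R, z - z = 0) by (intros; ring).
  assert (forall z:R, z ^ 2 - z * z = 0) by (intros; ring).
  field_simplify in E00; [|repeat split; auto].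
  field_simplify in E11; [| auto | repeat split; auto].
  set (db := Derive b r) in *. set (dh := Derive h r) in *.
  set (ddb := Derive (fun x : R => Derive b x) r) in *.
  set (BB := b r) in *. set (HH := h r) in *.
  match type of E00 with ?A0 = ?B0 => match type of E11 with ?A1 = ?B1 =>
    apply Rminus_diag_uniq;
    transitivity (- ((BB ^ 2 / HH ^ 2) * (A1 - B1) + (A0 - B0) / BB ^ 2));
    [ field; auto | rewrite E00, E11; rewrite !Rminus_diag; rewrite Rmult_0_r; unfold Rdiv; rewrite Rmult_0_l; rewrite Rplus_0_r; apply Ropp_0 ] end end.
Qed.

Theorem proposition6
  (r0 r1 : R) (b h mu pr pt : R -> R) (k1 k2 k3 : R)
  (Hr0 : 0 <= r0) (Hr01 : r0 < r1)
  (Hb_smooth : forall (n : nat) (r : R), r0 < r < r1 -> ex_derive_n b n r)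
  (Hh_smooth : forall (n : nat) (r : R), r0 < r < r1 -> ex_derive_n h n r)
  (Hb_pos : forall r : R, r0 < r < r1 -> 0 < b r)
  (Hh_pos : forall r : R, r0 < r < r1 -> 0 < h r)
  (Hfield : forall (x : nat -> R) (k l : nat),
      r0 < x 1%nat < r1 -> 0 < x 2%nat < PI -> (k < 4)%nat -> (l < 4)%nat ->
      ricci (sss_metric b h) (sss_inv b h) k l x
        - / 2 * scalar_curv (sss_metric b h) (sss_inv b h) x * sss_metric b h x k l
      = T_tensor b h mu pr pt x k l + K_tensor b h k1 k2 k3 x k l) :
  (forall r : R, r0 < r < r1 -> pr r = - mu r) <->
  (exists k4 : R, forall r : R, r0 < r < r1 -> / (h r)^2 = k3 * r^2 + k4).
Proof.
  pose proof (key r0 r1 b h mu pr pt k1 k2 k3 Hr0 Hr01 Hb_smooth Hh_smooth Hb_pos Hh_pos Hfield) as K.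
  assert (Dinv : forall t, r0 < t < r1 ->
     is_derive (fun s => / (h s)^2) t (- (2 * h t * Derive h t) / ((h t)^2)^2)).
  { intros t Ht. assert (Hn : h t <> 0) by (specialize (Hh_pos t Ht); lra).
    auto_derive.
    - repeat split; try exact (Hh_smooth 1%nat t Ht);
      repeat apply Rmult_integral_contrapositive_currified; auto; lra.
    - change (fun x : R => h x) with h. field. auto. }
  split.
  - intros Hp.
    set (f := fun s => / (h s)^2 - k3 * s^2).
    set (c := (r0 + r1) / 2).
    exists (f c). intros r Hr.
    assert (Df : forall t, r0 < t < r1 -> is_derive f t 0).
    { intros t Ht. assert (Hn : h t <> 0) by (specialize (Hh_pos t Ht); lra).
      assert (Bn : b t <> 0) by (specialize (Hb_pos t Ht); lra).
      assert (tn : t <> 0) by lra.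
      assert (Hd : Derive h t = - k3 * t * (h t)^3).
      { pose proof (K t Ht) as Kt. rewrite (Hp t Ht) in Kt.
        assert (E : 2 * b t ^ 2 * Derive h t / (t * h t ^ 3) = - 2 * k3 * b t ^ 2) by lra.
        replace (Derive h t) with ((2 * b t ^ 2 * Derive h t / (t * h t ^ 3)) * (t * h t ^ 3 / (2 * b t ^ 2)))
          by (field; auto).
        rewrite E. field; auto. }
      unfold f. replace 0 with ((- (2 * h t * Derive h t) / ((h t)^2)^2) - k3 * (2 * t)).
      + apply (is_derive_minus (fun s => / (h s)^2) (fun s => k3 * s^2)).
        * apply Dinv; auto.
        * auto_derive; auto. ring.
      + rewrite Hd. field; auto. }
    assert (Hc : r0 < c < r1) by (unfold c; lra).
    assert (Hfr : f r = f c).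
    { destruct (Rtotal_order r c) as [Hlt|[Heq|Hgt]].
      - apply (eq_is_derive f r c); auto. intros t Ht. apply Df. lra.
      - subst; auto.
      - symmetry. apply (eq_is_derive f c r); auto. intros t Ht. apply Df. lra. }
    unfold f in Hfr |- *. lra.
  - intros [k4 Hk] r Hr.
    assert (Hn : h r <> 0) by (specialize (Hh_pos r Hr); lra).
    assert (rn : r <> 0) by lra.
    assert (E1 : Derive (fun s => / (h s)^2) r = - (2 * h r * Derive h r) / ((h r)^2)^2).
    { apply is_derive_unique. apply Dinv; auto. }
    assert (E2 : Derive (fun s => / (h s)^2) r = k3 * (2 * r)).
    { rewrite (Derive_ext_loc _ (fun s => k3 * s^2 + k4)).
      - apply is_derive_unique. auto_derive; auto. ring.
      - apply (loc_int r0 r1); auto. }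
    assert (Hd : Derive h r = - k3 * r * (h r)^3).
    { rewrite E1 in E2.
      replace (Derive h r) with ((- (2 * h r * Derive h r) / ((h r)^2)^2) * (- (h r)^3 / 2))
        by (field; auto).
      rewrite E2. field. }
    pose proof (K r Hr) as Kr. rewrite Hd in Kr.
    assert (pr r + mu r = 0) by (rewrite Kr; field; auto). lra.
Qed.
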